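(* In the sequential two-level memory model with a fast memory of size $M$, any classical Cholesky decomposition algorithm for $n{\times}n$ matrices has bandwidth cost $\Omega(n^3/M^{1/2})$ and latency cost $\Omega(n^3/M^{3/2})$.
   Context: The Cholesky decomposition of a real symmetric positive definite matrix $A$ is $A = LL^T$ with $L$ lower triangular; its entries satisfy $L(i,i)=\sqrt{A(i,i)-\sum_{k=1}^{i-1}L(i,k)^2}$ and $L(i,j)=\frac{1}{L(j,j)}\big(A(i,j)-\sum_{k=1}^{j-1}L(i,k)L(j,k)\big)$ for $i>j$. A ''classical'' Cholesky algorithm performs exactly these arithmetic operations, possibly reordered using only associativity and commutativity of addition (no pivoting, no distributivity). Sequential two-level memory model: a fast memory holding $M$ words and an unbounded slow memory; the matrix initially resides in slow memory and is too large to fit in fast memory ($M<n^2$). Words contiguous in slow memory can be read or written together as one message, of at most $M$ words. Bandwidth cost is the total number of words transferred between fast and slow memory; latency cost is the total number of messages. *)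

(* Defs.v *)
From Stdlib Require Import Reals List Arith.
Import ListNotations.

(** A word of memory holds a symbolic expression recording exactly which
   arithmetic operations produced it.  [Ent i j] is the input entry
   A(i,j) with j <= i (A is symmetric, so the lower triangle determines it;
   indices are 0-based). *)
Inductive expr : Type :=
| Ent : nat -> nat -> expr
| EAdd : expr -> expr -> expr
| ESub : expr -> expr -> expr
| EMul : expr -> expr -> expr
| EDiv : expr -> expr -> expr
| ESqrt : expr -> expr.

(** [Lterm n i j e]: e computes L(i,j) (j <= i < n) by the Cholesky formulas
     L(i,i) = sqrt (A(i,i) - sum_{k<i} L(i,k)^2)
     L(i,j) = (A(i,j) - sum_{k<j} L(i,k) L(j,k)) / L(j,j)
   where the expression A(i,j) - sum_k ... may be evaluated in any order
   obtained by associativity/commutativity of addition.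

   [Psum n i j a S s e]: e is a partial sum for the entry (i,j): if [s]
   is true, e = [a]A(i,j) - sum_{k in S} L(i,k) L(j,k); if [s] is false,
   e is the negation of that quantity. *)
Inductive Lterm (n : nat) : nat -> nat -> expr -> Prop :=
| L_diag : forall i S e,
    i < n -> Psum n i i true S true e ->
    (forall k, S k = Nat.ltb k i) ->
    Lterm n i i (ESqrt e)
| L_off : forall i j S e d,
    j < i -> i < n -> Psum n i j true S true e ->
    (forall k, S k = Nat.ltb k j) ->
    Lterm n j j d ->
    Lterm n i j (EDiv e d)
with Psum (n : nat) : nat -> nat -> bool -> (nat -> bool) -> bool -> expr -> Prop :=
| P_ent : forall i j, j <= i -> i < n ->
    Psum n i j true (fun _ => false) true (Ent i j)
| P_prod : forall i j k x y, k < j -> j <= i ->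
    Lterm n i k x -> Lterm n j k y ->
    Psum n i j false (fun k' => Nat.eqb k' k) false (EMul x y)
| P_add : forall i j a1 a2 S1 S2 s x y,
    Psum n i j a1 S1 s x -> Psum n i j a2 S2 s y ->
    andb a1 a2 = false -> (forall k, andb (S1 k) (S2 k) = false) ->
    Psum n i j (orb a1 a2) (fun k => orb (S1 k) (S2 k)) s (EAdd x y)
| P_sub : forall i j a1 a2 S1 S2 s x y,
    Psum n i j a1 S1 s x -> Psum n i j a2 S2 (negb s) y ->
    andb a1 a2 = false -> (forall k, andb (S1 k) (S2 k) = false) ->
    Psum n i j (orb a1 a2) (fun k => orb (S1 k) (S2 k)) s (ESub x y).

(** An arithmetic operation is allowed iff its result is one of the
    quantities of the classical Cholesky computation. *)
Definition classical (n : nat) (e : expr) : Prop :=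
  (exists i j, Lterm n i j e) \/ (exists i j a S s, Psum n i j a S s e).

(** Fast memory: slots 0..M-1; slow memory: unbounded (addresses in nat).
   [None] = word holding no (meaningful) value. *)
Record state : Type := mkState {
  fast : nat -> option expr;
  slow : nat -> option expr }.

Inductive binop : Type := BAdd | BSub | BMul | BDiv.

Definition apply_binop (o : binop) (x y : expr) : expr :=
  match o with
  | BAdd => EAdd x y | BSub => ESub x y
  | BMul => EMul x y | BDiv => EDiv x y
  end.

Inductive instr : Type :=
(* one message: read slow words a, a+1, ..., a+len-1 into fast slots dst *)
| Read (a : nat) (dst : list nat)
(* one message: write fast slots src into slow words a, a+1, ... *)
| Write (src : list nat) (a : nat)
| Op2 (o : binop) (d s1 s2 : nat)
| OpSqrt (d s : nat).

Definition upd (f : nat -> option expr) (x : nat) (v : option expr)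
  : nat -> option expr := fun y => if Nat.eqb y x then v else f y.

Fixpoint load (f sl : nat -> option expr) (a : nat) (dst : list nat)
  : nat -> option expr :=
  match dst with
  | [] => f
  | d :: ds => upd (load f sl (S a) ds) d (sl a)
  end.

Fixpoint store (sl f : nat -> option expr) (src : list nat) (a : nat)
  : nat -> option expr :=
  match src with
  | [] => sl
  | d :: ds => upd (store sl f ds (S a)) a (f d)
  end.

Inductive step (n M : nat) : state -> instr -> state -> Prop :=
| st_read : forall f sl a dst,
    1 <= length dst <= M -> NoDup dst -> (forall d, In d dst -> d < M) ->
    step n M (mkState f sl) (Read a dst) (mkState (load f sl a dst) sl)
| st_write : forall f sl src a,
    1 <= length src <= M -> NoDup src -> (forall d, In d src -> d < M) ->
    step n M (mkState f sl) (Write src a) (mkState f (store sl f src a))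
| st_op2 : forall f sl o d s1 s2 x y,
    d < M -> s1 < M -> s2 < M -> f s1 = Some x -> f s2 = Some y ->
    classical n (apply_binop o x y) ->
    step n M (mkState f sl) (Op2 o d s1 s2)
         (mkState (upd f d (Some (apply_binop o x y))) sl)
| st_sqrt : forall f sl d s x,
    d < M -> s < M -> f s = Some x -> classical n (ESqrt x) ->
    step n M (mkState f sl) (OpSqrt d s) (mkState (upd f d (Some (ESqrt x))) sl).

Inductive exec (n M : nat) : state -> list instr -> state -> Prop :=
| ex_nil : forall st, exec n M st [] st
| ex_cons : forall st st' st'' i p,
    step n M st i st' -> exec n M st' p st'' -> exec n M st (i :: p) st''.

Definition words (i : instr) : nat :=
  match i with
  | Read _ dst => length dst
  | Write src _ => length src
  | _ => 0
  end.

Definition is_msg (i : instr) : nat :=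
  match i with
  | Read _ _ | Write _ _ => 1
  | _ => 0
  end.

Definition bandwidth (p : list instr) : nat := fold_right (fun i acc => words i + acc) 0 p.
Definition latency (p : list instr) : nat := fold_right (fun i acc => is_msg i + acc) 0 p.

(* initially the matrix resides in slow memory (arbitrary layout, possibly
   with repeated entries, e.g. both triangles), fast memory is empty *)
Definition matrix_layout (n : nat) (s0 : nat -> option expr) : Prop :=
  forall a e, s0 a = Some e -> exists i j, j <= i /\ i < n /\ e = Ent i j.

Definition init_state (s0 : nat -> option expr) : state :=
  mkState (fun _ => None) s0.

Definition computes_cholesky (n : nat) (st : state) : Prop :=
  forall i j, j <= i -> i < n ->
    exists a e, slow st a = Some e /\ Lterm n i j e.

(* Main.v *)
Require Import Defs.
From Stdlib Require Import Reals List Arith Lia Lra Psatz Classical.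
Import ListNotations.


Inductive child : expr -> expr -> Prop :=
| ch_addl x y : child x (EAdd x y) | ch_addr x y : child y (EAdd x y)
| ch_subl x y : child x (ESub x y) | ch_subr x y : child y (ESub x y)
| ch_mull x y : child x (EMul x y) | ch_mulr x y : child y (EMul x y)
| ch_divl x y : child x (EDiv x y) | ch_divr x y : child y (EDiv x y)
| ch_sqrt x : child x (ESqrt x).

Inductive sub (e : expr) : expr -> Prop :=
| sub_refl : sub e e
| sub_step : forall c x, child c x -> sub e c -> sub e x.

Lemma sub_trans : forall a b c, sub a b -> sub b c -> sub a c.
Proof. intros a b c H1 H2; induction H2; [assumption| eapply sub_step; eauto]. Qed.

Lemma sub_inv : forall e x, sub e x -> e = x \/ exists c, child c x /\ sub e c.
Proof. intros e x H; inversion H; subst; eauto. Qed.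

Lemma sub_child : forall c x, child c x -> sub c x.
Proof. intros; eapply sub_step; eauto; constructor. Qed.

Lemma sub_Ent : forall e i j, sub e (Ent i j) -> e = Ent i j.
Proof. intros e i j H; apply sub_inv in H as [H|[c [Hc _]]]; auto; inversion Hc. Qed.

Fixpoint pairof (e : expr) : nat * nat :=
  match e with
  | Ent i j => (i, j)
  | EAdd x _ | ESub x _ | EDiv x _ | ESqrt x => pairof x
  | EMul x y => (fst (pairof x), fst (pairof y))
  end.

Definition entp (p : nat * nat) := Ent (fst p) (snd p).

Scheme Lterm_mut := Induction for Lterm Sort Prop
with Psum_mut := Induction for Psum Sort Prop.

Lemma pairof_LP : forall n,
  (forall i j e, Lterm n i j e -> pairof e = (i,j)) /\
  (forall i j a S s e, Psum n i j a S s e -> pairof e = (i,j)).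
Proof.
  intro n; split.
  - apply (Lterm_mut n (fun i j e _ => pairof e = (i,j))
                      (fun i j a S s e _ => pairof e = (i,j))); intros; simpl; auto;
    try (rewrite H; auto); try (rewrite H0; auto).
  - apply (Psum_mut n (fun i j e _ => pairof e = (i,j))
                      (fun i j a S s e _ => pairof e = (i,j))); intros; simpl; auto;
    try (rewrite H; auto); try (rewrite H0; auto).
Qed.

Lemma pairof_L : forall n i j e, Lterm n i j e -> pairof e = (i,j).
Proof. intro n; apply (pairof_LP n). Qed.
Lemma pairof_P : forall n i j a S s e, Psum n i j a S s e -> pairof e = (i,j).
Proof. intro n; apply (pairof_LP n). Qed.

Lemma sub_ent_nonent : forall a b x, sub (Ent a b) x -> (forall i j, x <> Ent i j) ->
  exists c, child c x /\ sub (Ent a b) c.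
Proof. intros a b x H Hx; apply sub_inv in H as [H|H]; auto. subst; exfalso; eapply Hx; eauto. Qed.

Lemma bounds_LP : forall n,
  (forall i j e, Lterm n i j e -> forall a b, sub (Ent a b) e -> a <= i /\ b <= j) /\
  (forall i j a' S s e, Psum n i j a' S s e -> forall a b, sub (Ent a b) e -> a <= i /\ b <= j).
Proof.
  intro n.
  assert (G : forall i j e, Lterm n i j e -> forall a b, sub (Ent a b) e -> a <= i /\ b <= j).
  { apply (Lterm_mut n (fun i j e _ => forall a b, sub (Ent a b) e -> a <= i /\ b <= j)
                      (fun i j a' S s e _ => forall a b, sub (Ent a b) e -> a <= i /\ b <= j));
    intros;
    try (apply sub_Ent in H; injection H; intros; subst; lia);
    match goal with H : sub (Ent _ _) _ |- _ =>
      apply sub_ent_nonent in H; [|intros ? ? ?; discriminate];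
      destruct H as [c [Hc Hs]]; inversion Hc; subst end;
    repeat match goal with
    | H : forall a b, sub (Ent a b) ?x -> _, Hs : sub (Ent _ _) ?x |- _ =>
        specialize (H _ _ Hs) end; lia. }
  split; [exact G|].
  apply (Psum_mut n (fun i j e _ => forall a b, sub (Ent a b) e -> a <= i /\ b <= j)
                      (fun i j a' S s e _ => forall a b, sub (Ent a b) e -> a <= i /\ b <= j));
    intros;
    try (apply sub_Ent in H; injection H; intros; subst; lia);
    match goal with H : sub (Ent _ _) _ |- _ =>
      apply sub_ent_nonent in H; [|intros ? ? ?; discriminate];
      destruct H as [c [Hc Hs]]; inversion Hc; subst end;
    repeat match goal with
    | H : forall a b, sub (Ent a b) ?x -> _, Hs : sub (Ent _ _) ?x |- _ =>
        specialize (H _ _ Hs) end; lia.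
Qed.

Lemma psum_ent : forall n i j a S s e, Psum n i j a S s e -> a = true -> sub (Ent i j) e.
Proof.
  intros n i j a S s e H; induction H; intros Ha; try discriminate.
  - constructor.
  - destruct a1; simpl in Ha.
    + eapply sub_step; [constructor|auto].
    + eapply sub_step; [apply ch_addr|auto].
  - destruct a1; simpl in Ha.
    + eapply sub_step; [constructor|auto].
    + eapply sub_step; [apply ch_subr|auto].
Qed.

Lemma lterm_ent : forall n i j e, Lterm n i j e -> sub (Ent i j) e.
Proof.
  intros n i j e H; inversion H; subst.
  - eapply sub_step; [constructor|]. eapply psum_ent; eauto.
  - eapply sub_step; [constructor|]. eapply psum_ent; eauto.
Qed.

Ltac rw_pairs := repeat match goal with
  | Hp : Psum _ _ _ _ _ _ ?e |- context [pairof ?e] => rewrite (pairof_P _ _ _ _ _ _ _ Hp)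
  | Hp : Lterm _ _ _ ?e |- context [pairof ?e] => rewrite (pairof_L _ _ _ _ Hp)
  end.

Lemma child_info : forall n x c, classical n x -> child c x ->
  classical n c /\ (pairof c = pairof x \/
     ((exists i j, Lterm n i j c) /\ ~ sub (entp (pairof x)) c)).
Proof.
  intros n x c [[i [j H]]|[i [j [a [S [s H]]]]]] Hc.
  - inversion H; subst; inversion Hc; subst.
    + split; [right; eauto 6|left; reflexivity].
    + split; [right; eauto 6|left; reflexivity].
    + split; [left; eauto|right; split; eauto].
      simpl; rw_pairs; unfold entp; simpl; intro Hs.
      match goal with HL : Lterm _ _ _ ?d, Hs : sub _ ?d |- _ =>
        apply (proj1 (bounds_LP n)) with (a:=i) (b:=j) in HL; auto; lia end.
  - inversion H; subst; inversion Hc; subst;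
      try (split; [right; eauto 6|left; simpl; rw_pairs; reflexivity]).
    + split; [left; eauto|right; split; eauto].
      simpl; rw_pairs; unfold entp; simpl; intro Hs.
      match goal with HL : Lterm _ _ _ ?d, Hs : sub _ ?d |- _ =>
        apply (proj1 (bounds_LP n)) with (a:=i) (b:=j) in HL; auto; lia end.
    + split; [left; eauto|right; split; eauto].
      simpl; rw_pairs; unfold entp; simpl; intro Hs.
      match goal with HL : Lterm _ _ _ ?d, Hs : sub _ ?d |- _ =>
        apply (proj1 (bounds_LP n)) with (a:=i) (b:=j) in HL; auto; lia end.
Qed.

Lemma product_in : forall n i j a S s e, Psum n i j a S s e -> forall k, S k = true ->
  exists x y, sub (EMul x y) e /\ Lterm n i k x /\ Lterm n j k y.
Proof.
  intros n i j a S s e H; induction H; intros k0 Hk; try discriminate.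
  - apply Nat.eqb_eq in Hk; subst. exists x, y; split; [constructor|auto].
  - apply Bool.orb_true_iff in Hk as [Hk|Hk].
    + destruct (IHPsum1 _ Hk) as [x' [y' [Hs R]]]; exists x', y'; split; auto.
      eapply sub_step; [constructor|auto].
    + destruct (IHPsum2 _ Hk) as [x' [y' [Hs R]]]; exists x', y'; split; auto.
      eapply sub_step; [apply ch_addr|auto].
  - apply Bool.orb_true_iff in Hk as [Hk|Hk].
    + destruct (IHPsum1 _ Hk) as [x' [y' [Hs R]]]; exists x', y'; split; auto.
      eapply sub_step; [constructor|auto].
    + destruct (IHPsum2 _ Hk) as [x' [y' [Hs R]]]; exists x', y'; split; auto.
      eapply sub_step; [apply ch_subr|auto].
Qed.

Lemma path_lemma : forall n P x0 y0, P = EMul x0 y0 -> forall V, sub P V -> classical n V ->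
  pairof V = pairof P \/ exists N, sub N V /\ sub P N /\ N <> P /\ classical n N /\
     sub (entp (pairof P)) N /\ pairof N = pairof P.
Proof.
  intros n P x0 y0 HP V H; induction H as [|c x Hc Hs IH]; intros Hcl; [left; auto|].
  destruct (child_info n x c Hcl Hc) as [Hcc Hinfo].
  destruct (IH Hcc) as [E|[N [H1 [H2 [H3 [H4 [H5 H6]]]]]]].
  - destruct Hinfo as [E2|[[i [j HL]] _]].
    + left; congruence.
    + right; exists c; split; [apply sub_child; auto|].
      split; [auto|]. split; [intro; subst; inversion HL|].
      split; [left; eauto|]. split; [|auto].
      rewrite <- E, (pairof_L _ _ _ _ HL); apply lterm_ent with n; auto.
  - right; exists N; repeat split; auto. eapply sub_trans; eauto. apply sub_child; auto.
Qed.


Definition o2l (o : option expr) : list expr := match o with Some v => [v] | None => [] end.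

Lemma in_fo : forall {A} (g : A -> option expr) l v,
  In v (flat_map (fun k => o2l (g k)) l) <-> exists k, In k l /\ g k = Some v.
Proof.
  intros A g l v; rewrite in_flat_map; split; intros [k [H1 H2]]; exists k; split; auto.
  - destruct (g k); simpl in H2; [destruct H2 as [H2|[]]; subst; auto|destruct H2].
  - rewrite H2; simpl; auto.
Qed.

Lemma len_fo : forall {A} (g : A -> option expr) l,
  length (flat_map (fun k => o2l (g k)) l) <= length l.
Proof. intros A g l; induction l; simpl; auto. rewrite length_app; destruct (g a); simpl; lia. Qed.

Definition iovals (st : state) (i : instr) : list expr :=
  match i with
  | Read a dst => flat_map (fun k => o2l (slow st (a + k))) (seq 0 (length dst))
  | Write src a => flat_map (fun d => o2l (fast st d)) src
  | _ => []
  end.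

Definition result_of (st : state) (i : instr) : option expr :=
  match i with
  | Op2 o d s1 s2 => match fast st s1, fast st s2 with
                     | Some x, Some y => Some (apply_binop o x y) | _, _ => None end
  | OpSqrt d s => match fast st s with Some x => Some (ESqrt x) | None => None end
  | _ => None
  end.

Definition memv (st : state) (v : expr) := (exists d, fast st d = Some v) \/ (exists a, slow st a = Some v).
Definition alive (e : expr) (st : state) := exists v, memv st v /\ sub e v.

Lemma iovals_len : forall st i, length (iovals st i) <= words i.
Proof. intros st [a dst|src a|o d s1 s2|d s]; simpl; auto; try apply len_fo.
  rewrite <- (length_seq (length dst) 0) at 2; apply len_fo. Qed.

Lemma iovals_mem : forall st i v, In v (iovals st i) -> memv st v.
Proof. intros st [a dst|src a|o d s1 s2|d s] v H; simpl in H; try destruct H;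
  apply in_fo in H as [k [_ Hk]]; [right|left]; eauto. Qed.

Lemma result_not_ent : forall st i r, result_of st i = Some r -> forall a b, r <> Ent a b.
Proof. intros st [a dst|src a|o d s1 s2|d s] r H; simpl in H; try discriminate.
  - destruct (fast st s1), (fast st s2); try discriminate. injection H; intros; subst.
    destruct o; discriminate.
  - destruct (fast st s); try discriminate. injection H; intros; subst; discriminate. Qed.

Lemma upd_spec : forall f x v y, upd f x v y = if Nat.eqb y x then v else f y.
Proof. reflexivity. Qed.

Lemma load_spec : forall dst f sl a d v, load f sl a dst d = Some v ->
  f d = Some v \/ (In d dst /\ exists k, k < length dst /\ sl (a + k) = Some v).
Proof.
  induction dst as [|x ds IH]; intros f sl a d v H; simpl in H; auto.
  rewrite upd_spec in H. destruct (Nat.eqb_spec d x).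
  - subst. right; split; [left; auto|]. exists 0; simpl; split; [lia|]. rewrite Nat.add_0_r; auto.
  - apply IH in H as [H|[H1 [k [H2 H3]]]]; auto. right; split; [right; auto|].
    exists (S k); simpl; split; [lia|]. rewrite <- H3; f_equal; lia.
Qed.

Lemma store_spec : forall src sl f a b v, store sl f src a b = Some v ->
  sl b = Some v \/ exists d, In d src /\ f d = Some v.
Proof.
  induction src as [|x ds IH]; intros sl f a b v H; simpl in H; auto.
  rewrite upd_spec in H. destruct (Nat.eqb_spec b a).
  - right; exists x; split; [left|]; auto.
  - apply IH in H as [H|[d [H1 H2]]]; auto. right; exists d; split; [right|]; auto.
Qed.

Lemma origin_fast : forall n M st i st' d x, step n M st i st' -> fast st' d = Some x ->
  (exists d', fast st d' = Some x) \/ In x (iovals st i) \/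
  (result_of st i = Some x /\ forall c, child c x -> exists d', fast st d' = Some c).
Proof.
  intros n M st i st' d x Hs H; inversion Hs; subst; simpl in *.
  - apply load_spec in H as [H|[_ [k [Hk H]]]]; [left; eauto|right; left].
    apply in_fo; exists k; split; auto. apply in_seq; lia.
  - left; eauto.
  - rewrite upd_spec in H; destruct (Nat.eqb_spec d d0); [|left; eauto].
    injection H; intros; subst. right; right. rewrite H3, H4; split; auto.
    intros c Hc; destruct o; simpl in Hc; inversion Hc; subst; eauto.
  - rewrite upd_spec in H; destruct (Nat.eqb_spec d d0); [|left; eauto].
    injection H; intros; subst. right; right. rewrite H2; split; auto.
    intros c Hc; inversion Hc; subst; eauto.
Qed.

Lemma origin_slow : forall n M st i st' a x, step n M st i st' -> slow st' a = Some x ->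
  slow st a = Some x \/ In x (iovals st i).
Proof.
  intros n M st i st' a x Hs H; inversion Hs; subst; simpl in *; auto.
  apply store_spec in H as [H|[dd [Hd1 Hd2]]]; auto. right; apply in_fo; eauto.
Qed.

Lemma newly_alive : forall n M st i st' e, step n M st i st' -> alive e st' -> ~ alive e st ->
  result_of st i = Some e /\ forall c, child c e -> exists d, fast st d = Some c.
Proof.
  intros n M st i st' e Hs [v [Hm Hsub]] Hna.
  destruct Hm as [[d Hd]|[a Ha]].
  - destruct (origin_fast _ _ _ _ _ _ _ Hs Hd) as [[d' H]|[H|[Hr Hc]]].
    + exfalso; apply Hna; exists v; split; [left; eauto|auto].
    + exfalso; apply Hna; exists v; split; [eapply iovals_mem; eauto|auto].
    + apply sub_inv in Hsub as [E|[c [Hc' Hsc]]]; [subst; auto|].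
      exfalso; apply Hna; destruct (Hc c Hc') as [d' Hd']; exists c; split; [left; eauto|auto].
  - exfalso; apply Hna; exists v; split; auto.
    destruct (origin_slow _ _ _ _ _ _ _ Hs Ha) as [H|H]; [right; eauto|eapply iovals_mem; eauto].
Qed.

Definition Inv (n M : nat) (st : state) : Prop :=
  (forall d v, fast st d = Some v -> d < M /\ classical n v) /\
  (forall a v, slow st a = Some v -> classical n v).

Lemma inv_step : forall n M st i st', Inv n M st -> step n M st i st' -> Inv n M st'.
Proof.
  intros n M st i st' [IF IS] Hs; inversion Hs; subst; simpl in *; split; simpl; auto.
  - intros d v Hv; apply load_spec in Hv as [Hv|[Hin [k [_ Hk]]]]; auto.
    split; [auto|eapply IS; eauto].
  - intros b v Hv; apply store_spec in Hv as [Hv|[d [_ Hd]]]; [eauto|eapply IF; eauto].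
  - intros d' v Hv; rewrite upd_spec in Hv; destruct (Nat.eqb_spec d' d); [|auto].
    subst; injection Hv; intros; subst; auto.
  - intros d' v Hv; rewrite upd_spec in Hv; destruct (Nat.eqb_spec d' d); [|auto].
    subst; injection Hv; intros; subst; auto.
Qed.

Lemma step_words : forall n M st i st', step n M st i st' -> words i <= M * is_msg i.
Proof. intros n M st i st' Hs; inversion Hs; subst; simpl; lia. Qed.

Definition d0 : instr := OpSqrt 0 0.

Definition Run (n M : nat) (prog : list instr) (sts : nat -> state) : Prop :=
  forall t, t < length prog -> step n M (sts t) (nth t prog d0) (sts (S t)).

Lemma exec_states : forall n M st p st'', exec n M st p st'' ->
  exists sts, sts 0 = st /\ sts (length p) = st'' /\ Run n M p sts.
Proof.
  intros n M st p st'' H; induction H.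
  - exists (fun _ => st); repeat split; auto. intros t Ht; simpl in Ht; lia.
  - destruct IHexec as [sts [E0 [E1 E2]]].
    exists (fun t => match t with 0 => st | S t => sts t end); repeat split; auto.
    intros [|t] Ht; simpl in *; [subst; auto|]. apply E2; lia.
Qed.

Lemma exec_lat : forall n M st p st'', exec n M st p st'' -> bandwidth p <= M * latency p.
Proof.
  intros n M st p st'' H; induction H as [st0|st1 st2 st3 i p0 Hs Hex IH]; [simpl; lia|].
  simpl; apply step_words in Hs; lia.
Qed.


Definition fastvals (M : nat) (st : state) := flat_map (fun d => o2l (fast st d)) (seq 0 M).

Lemma fastvals_in : forall n M st d v, Inv n M st -> fast st d = Some v -> In v (fastvals M st).
Proof. intros n M st d v [IF _] H; apply in_fo; exists d; split; auto.
  apply in_seq; specialize (IF _ _ H); lia. Qed.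

Lemma trace : forall n M prog sts, Run n M prog sts ->
  (forall t, t <= length prog -> Inv n M (sts t)) ->
  forall s m, s + m <= length prog -> forall x d, fast (sts (s+m)) d = Some x ->
  sub (entp (pairof x)) x ->
  exists v, pairof v = pairof x /\ (In v (fastvals M (sts s)) \/
     exists t, s <= t < s + m /\ In v (iovals (sts t) (nth t prog d0))).
Proof.
  intros n M prog sts HR HI s m; induction m as [|m IH]; intros Hle x d Hx Hsub.
  - exists x; split; auto; left. rewrite Nat.add_0_r in Hx. eapply fastvals_in; [apply HI; lia|eauto].
  - assert (Hst := HR (s + m) ltac:(lia)). rewrite Nat.add_succ_r in Hx.
    destruct (origin_fast _ _ _ _ _ _ _ Hst Hx) as [[d' H]|[H|[Hr Hc]]].
    + destruct (IH ltac:(lia) x d' H Hsub) as [v [Hv1 [Hv2|[t [Ht Hv2]]]]];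
        exists v; split; auto; right; exists t; split; auto; lia.
    + exists x; split; auto; right; exists (s+m); split; auto; lia.
    + assert (Hcl : classical n x) by (apply (proj1 (HI (S (s+m)) ltac:(lia))) with d; auto).
      destruct (sub_inv _ _ Hsub) as [E|[c [Hc' Hsc]]].
      * exfalso; eapply result_not_ent; eauto.
      * destruct (child_info _ _ _ Hcl Hc') as [Hcc [E|[_ Hn]]]; [|contradiction].
        destruct (Hc c Hc') as [dc Hdc]. rewrite <- E in Hsc.
        destruct (IH ltac:(lia) c dc Hdc Hsc) as [v [Hv1 [Hv2|[t [Ht Hv2]]]]];
          exists v; (split; [congruence|]); auto; right; exists t; split; auto; lia.
Qed.

Lemma slow_range : forall n M prog sts, Run n M prog sts ->
  forall s m, s + m <= length prog -> forall a V, slow (sts (s + m)) a = Some V ->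
  slow (sts s) a = Some V \/ exists t, s <= t < s + m /\ In V (iovals (sts t) (nth t prog d0)).
Proof.
  intros n M prog sts HR s m; induction m as [|m IH]; intros Hle a V H.
  - rewrite Nat.add_0_r in H; auto.
  - rewrite Nat.add_succ_r in H.
    destruct (origin_slow _ _ _ _ _ _ _ (HR (s+m) ltac:(lia)) H) as [H1|H1].
    + destruct (IH ltac:(lia) _ _ H1) as [H2|[t [Ht H2]]]; auto. right; exists t; split; auto; lia.
    + right; exists (s + m); split; auto; lia.
Qed.

Lemma switch_last : forall (Q : nat -> Prop) L, Q L -> ~ Q 0 ->
  exists tau, tau < L /\ ~ Q tau /\ forall t, tau < t <= L -> Q t.
Proof.
  intros Q L; induction L as [|L IH]; intros HL H0; [contradiction|].
  destruct (classic (Q L)) as [H|H].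
  - destruct (IH H H0) as [tau [H1 [H2 H3]]]. exists tau; repeat split; auto.
    intros t Ht; destruct (Nat.eq_dec t (S L)); [subst; auto|apply H3; lia].
  - exists L; repeat split; auto. intros t Ht; replace t with (S L) by lia; auto.
Qed.

Lemma switch_first : forall (Q : nat -> Prop) s m, ~ Q s -> Q (s + m) ->
  exists sg, s <= sg < s + m /\ ~ Q sg /\ Q (S sg).
Proof.
  intros Q s m; induction m as [|m IH]; intros H0 H1; [rewrite Nat.add_0_r in H1; contradiction|].
  destruct (classic (Q (s + m))) as [H|H].
  - destruct (IH H0 H) as [sg [H2 [H3 H4]]]; exists sg; repeat split; auto; lia.
  - exists (s + m); repeat split; auto; try lia. rewrite <- Nat.add_succ_r; auto.
Qed.

Definition Bseg (M : nat) prog (sts : nat -> state) (s e : nat) : list expr :=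
  fastvals M (sts s) ++ flat_map (fun t => iovals (sts t) (nth t prog d0)) (seq s (e - s))
  ++ fastvals M (sts e).

Lemma Bseg_in : forall M prog sts s e v,
  (In v (fastvals M (sts s)) \/ (exists t, s <= t < e /\ In v (iovals (sts t) (nth t prog d0)))
   \/ In v (fastvals M (sts e))) -> In (pairof v) (map pairof (Bseg M prog sts s e)).
Proof.
  intros M prog sts s e v H; apply in_map; unfold Bseg; rewrite !in_app_iff.
  destruct H as [H|[[t [Ht H]]|H]]; auto. right; left. apply in_flat_map; exists t; split; auto.
  apply in_seq; lia.
Qed.

Lemma charge : forall n M prog sts, Run n M prog sts ->
  (forall t, t <= length prog -> Inv n M (sts t)) ->
  forall i j k x y, Lterm n i k x -> Lterm n j k y -> k < j -> j <= i ->
  forall tau, tau < length prog -> ~ alive (EMul x y) (sts tau) ->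
  (forall t, tau < t <= length prog -> alive (EMul x y) (sts t)) ->
  forall s e, s <= tau -> tau < e -> e <= length prog ->
  In (i,k) (map pairof (Bseg M prog sts s e)) /\ In (j,k) (map pairof (Bseg M prog sts s e)) /\
  In (i,j) (map pairof (Bseg M prog sts s e)).
Proof.
  intros n M prog sts HR HI i j k x y Hx Hy Hkj Hji tau Htau Hna Hal s e Hs He HeL.
  set (P := EMul x y) in *.
  assert (HPpair : pairof P = (i,j)) by (simpl; rewrite (pairof_L _ _ _ _ Hx), (pairof_L _ _ _ _ Hy); auto).
  assert (HPcl : classical n P).
  { right; exists i, j, false, (fun k' => Nat.eqb k' k), false. apply P_prod; auto. }
  destruct (newly_alive _ _ _ _ _ _ (HR tau Htau) (Hal (S tau) ltac:(lia)) Hna) as [HresP HcP].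
  assert (Hchild : forall c p, child c P -> Lterm n (fst p) (snd p) c -> In p (map pairof (Bseg M prog sts s e))).
  { intros c p Hc HL. destruct (HcP c Hc) as [dc Hdc].
    assert (Hpc : pairof c = p) by (rewrite (pairof_L _ _ _ _ HL); destruct p; auto).
    assert (Hsc : sub (entp (pairof c)) c) by (rewrite Hpc; apply lterm_ent with n; auto).
    replace tau with (s + (tau - s)) in Hdc by lia.
    destruct (trace _ _ _ _ HR HI s (tau - s) ltac:(lia) c dc Hdc Hsc) as [v [Hv1 Hv2]].
    rewrite <- Hpc, <- Hv1; apply Bseg_in.
    destruct Hv2 as [H|[t [Ht H]]]; auto. right; left; exists t; split; auto; lia. }
  split; [apply (Hchild x (i,k)); [constructor|auto]|].
  split; [apply (Hchild y (j,k)); [constructor|auto]|].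
  destruct (Hal e ltac:(lia)) as [V [HmV HsV]].
  assert (HVcl : classical n V).
  { destruct (HI e HeL) as [IF IS]. destruct HmV as [[d Hd]|[a Ha]]; [eapply IF; eauto|eapply IS; eauto]. }
  destruct (path_lemma n P x y eq_refl V HsV HVcl) as [E|[N [HN1 [HN2 [HN3 [HN4 [HN5 HN6]]]]]]].
  - rewrite <- HPpair, <- E. apply Bseg_in.
    destruct HmV as [[d Hd]|[a Ha]].
    + right; right. eapply fastvals_in; eauto.
    + replace e with (tau + (e - tau)) in Ha by lia.
      destruct (slow_range _ _ _ _ HR tau (e - tau) ltac:(lia) a V Ha) as [H|[t [Ht H]]].
      * exfalso; apply Hna; exists V; split; [right; eauto|auto].
      * right; left; exists t; split; auto; lia.
  - assert (HNe : alive N (sts e)) by (exists V; split; auto).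
    assert (HNt : ~ alive N (sts tau)).
    { intros [v [Hv1 Hv2]]; apply Hna; exists v; split; auto. eapply sub_trans; eauto. }
    replace e with (tau + (e - tau)) in HNe by lia.
    destruct (switch_first (fun t => alive N (sts t)) tau (e - tau) HNt HNe) as [sg [Hsg [Hsg1 Hsg2]]].
    destruct (newly_alive _ _ _ _ _ _ (HR sg ltac:(lia)) Hsg2 Hsg1) as [HresN HcN].
    assert (Hsgt : tau <> sg) by (intro; subst; rewrite HresP in HresN; injection HresN; auto).
    destruct (sub_inv _ _ HN5) as [E|[c [Hc Hsc]]].
    + exfalso; eapply result_not_ent; [exact HresN|]. symmetry; exact E.
    + destruct (child_info _ _ _ HN4 Hc) as [Hcc [E|[_ Hn]]]; [|rewrite HN6 in Hn; contradiction].
      destruct (HcN c Hc) as [dc Hdc].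
      replace sg with (s + (sg - s)) in Hdc by lia.
      rewrite <- HN6, <- E in Hsc.
      destruct (trace _ _ _ _ HR HI s (sg - s) ltac:(lia) c dc Hdc Hsc) as [v [Hv1 Hv2]].
      rewrite <- HPpair, <- HN6, <- E, <- Hv1; apply Bseg_in.
      destruct Hv2 as [H|[t [Ht H]]]; auto. right; left; exists t; split; auto; lia.
Qed.


Fixpoint sumL {A} (l : list A) (f : A -> nat) : nat :=
  match l with [] => 0 | x :: l => f x + sumL l f end.

Lemma sumL_app : forall {A} (l l' : list A) f, sumL (l ++ l') f = sumL l f + sumL l' f.
Proof. induction l; simpl; intros; auto; rewrite IHl; lia. Qed.

Lemma sumL_le : forall {A} (l : list A) f g, (forall x, In x l -> f x <= g x) -> sumL l f <= sumL l g.
Proof. induction l; simpl; intros; auto. specialize (IHl f g (fun x H' => H x (or_intror H'))).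
  specialize (H a (or_introl eq_refl)); lia. Qed.

Lemma sumL_ext : forall {A} (l : list A) f g, (forall x, In x l -> f x = g x) -> sumL l f = sumL l g.
Proof. induction l; simpl; intros; auto. Qed.

Lemma sumL_plus : forall {A} (l : list A) f g, sumL l (fun x => f x + g x) = sumL l f + sumL l g.
Proof. induction l; simpl; intros; auto; rewrite IHl; lia. Qed.

Lemma sumL_const : forall {A} (l : list A) c, sumL l (fun _ => c) = length l * c.
Proof. induction l; simpl; intros; auto; rewrite IHl; lia. Qed.

Lemma sumL_mulc : forall {A} (l : list A) c f, sumL l (fun x => c * f x) = c * sumL l f.
Proof. induction l; simpl; intros; auto; rewrite IHl; lia. Qed.

Lemma sumL_swap : forall {A B} (l : list A) (l' : list B) F,
  sumL l (fun x => sumL l' (F x)) = sumL l' (fun y => sumL l (fun x => F x y)).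
Proof.
  induction l; simpl; intros.
  - induction l'; simpl; auto.
  - rewrite IHl, <- sumL_plus; auto.
Qed.

Lemma sumL_ge_elem : forall {A} (l : list A) f x, In x l -> f x <= sumL l f.
Proof. induction l; simpl; intros f x H; [destruct H|]. destruct H; [subst; lia|].
  specialize (IHl f x H); lia. Qed.

Lemma sumL_map : forall {A B} (l : list A) (g : A -> B) f, sumL (map g l) f = sumL l (fun x => f (g x)).
Proof. induction l; simpl; intros; auto. Qed.

Lemma sumL_prod : forall {A B} (l : list A) (l' : list B) F,
  sumL l (fun x => sumL l' (F x)) = sumL (list_prod l l') (fun p => F (fst p) (snd p)).
Proof.
  induction l; simpl; intros; auto. rewrite sumL_app, sumL_map, IHl; auto.
Qed.

Definition pair_dec : forall p q : nat * nat, {p = q} + {p <> q}.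
Proof. decide equality; apply Nat.eq_dec. Defined.

Definition inP (p : nat * nat) (P : list (nat * nat)) : nat := if in_dec pair_dec p P then 1 else 0.

Lemma inP_le1 : forall p P, inP p P <= 1.
Proof. intros; unfold inP; destruct in_dec; lia. Qed.

Lemma inP_in : forall p P, In p P -> inP p P = 1.
Proof. intros; unfold inP; destruct in_dec; auto; contradiction. Qed.

Lemma sumL_inP_filter : forall (l : list (nat*nat)) P,
  sumL l (fun p => inP p P) = length (filter (fun p => if in_dec pair_dec p P then true else false) l).
Proof. induction l; simpl; intros; auto. unfold inP at 1; destruct in_dec; simpl; rewrite IHl; auto. Qed.

Lemma nodup_map_inj : forall {A B} (h : A -> B) l, NoDup l ->
  (forall x y, In x l -> In y l -> h x = h y -> x = y) -> NoDup (map h l).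
Proof.
  intros A B h l Hl; induction Hl; simpl; intros Hi; constructor.
  - intro Hin; apply in_map_iff in Hin as [y [Hy1 Hy2]].
    assert (y = x) by (apply Hi; simpl; auto). subst; contradiction.
  - apply IHHl; intros; apply Hi; simpl; auto.
Qed.

Lemma nodup_prod : forall {A B} (l : list A) (l' : list B), NoDup l -> NoDup l' -> NoDup (list_prod l l').
Proof.
  intros A B l l' Hl Hl'; induction Hl; simpl; [constructor|].
  apply NoDup_app; auto.
  - apply nodup_map_inj; auto. intros y z _ _ E; injection E; auto.
  - intros p H1 H2. apply in_map_iff in H1 as [y [Hy _]]; subst.
    apply in_prod_iff in H2 as [H2 _]; contradiction.
Qed.

Lemma nodup_count : forall (l : list (nat*nat)) P, NoDup l -> sumL l (fun p => inP p P) <= length P.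
Proof.
  intros l P Hl; rewrite sumL_inP_filter. apply NoDup_incl_length.
  - apply NoDup_filter; auto.
  - intros p Hp; apply filter_In in Hp as [_ Hp]; destruct in_dec; auto; discriminate.
Qed.

Lemma inj_count : forall (h : nat -> nat -> nat * nat) a b P,
  (forall x y x' y', x < a -> y < b -> x' < a -> y' < b -> h x y = h x' y' -> x = x' /\ y = y') ->
  sumL (seq 0 a) (fun x => sumL (seq 0 b) (fun y => inP (h x y) P)) <= length P.
Proof.
  intros h a b P Hi. rewrite (sumL_prod (seq 0 a) (seq 0 b) (fun x y => inP (h x y) P)).
  rewrite <- (sumL_map (list_prod (seq 0 a) (seq 0 b)) (fun p => h (fst p) (snd p)) (fun p => inP p P)).
  apply nodup_count. apply nodup_map_inj.
  - apply nodup_prod; apply seq_NoDup.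
  - intros [x y] [x' y'] H1 H2 E. apply in_prod_iff in H1 as [H1 H1']. apply in_prod_iff in H2 as [H2 H2'].
    apply in_seq in H1, H1', H2, H2'. simpl in E. destruct (Hi x y x' y'); try lia; auto; subst; auto.
Qed.

Lemma m3a : forall x y z : nat, x <= 1 -> y <= 1 -> z <= 1 -> x * y * z <= z.
Proof. intros x y z Hx Hy Hz; destruct x as [|[|x]]; destruct y as [|[|y]]; simpl; lia. Qed.
Lemma m3b : forall x y z : nat, x <= 1 -> y <= 1 -> z <= 1 -> x * y * z <= y * x.
Proof. intros x y z Hx Hy Hz; destruct x as [|[|x]]; destruct y as [|[|y]]; simpl; lia. Qed.

Lemma cube_bound : forall (P : list (nat*nat)) (u v : nat -> nat) a,
  (forall x y, u x = u y -> x = y) -> (forall x y, v x = v y -> x = y) ->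
  sumL (seq 0 a) (fun k => sumL (seq 0 a) (fun j => sumL (seq 0 a) (fun i =>
     inP (u i, k) P * inP (v j, k) P * inP (u i, v j) P)))
  <= 2 * length P * (Nat.sqrt (length P) + 1).
Proof.
  intros P u v a Hu Hv.
  set (N := length P). set (s := Nat.sqrt N).
  set (d := fun k => sumL (seq 0 a) (fun i => inP (u i, k) P)).
  set (e := fun k => sumL (seq 0 a) (fun j => inP (v j, k) P)).
  assert (HN : N < S s * S s) by (apply Nat.sqrt_spec; lia).
  assert (Hd : sumL (seq 0 a) d <= N).
  { apply (inj_count (fun k i => (u i, k))). intros x y x' y' _ _ _ _ E; injection E; intros; split; auto. }
  assert (He : sumL (seq 0 a) e <= N).
  { apply (inj_count (fun k j => (v j, k))). intros x y x' y' _ _ _ _ E; injection E; intros; split; auto. }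
  apply Nat.le_trans with (sumL (seq 0 a) (fun k => (s + 1) * (d k + e k))).
  - apply sumL_le; intros k _.
    set (c := sumL (seq 0 a) (fun j => sumL (seq 0 a) (fun i => inP (u i, k) P * inP (v j, k) P * inP (u i, v j) P))).
    assert (H1 : c <= d k * e k).
    { assert (E1 : d k * e k = sumL (seq 0 a) (fun j => sumL (seq 0 a) (fun i => inP (v j, k) P * inP (u i, k) P))).
      { unfold e; cbv beta. rewrite <- sumL_mulc. apply sumL_ext; intros j _. unfold d; cbv beta.
        rewrite Nat.mul_comm, <- sumL_mulc; reflexivity. }
      rewrite E1. unfold c. apply sumL_le; intros j _. apply sumL_le; intros i _.
      apply m3b; apply inP_le1. }
    assert (H2 : c <= N).
    { apply Nat.le_trans with (sumL (seq 0 a) (fun j => sumL (seq 0 a) (fun i => inP (u i, v j) P))).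
      - apply sumL_le; intros j _; apply sumL_le; intros i _.
        apply m3a; apply inP_le1.
      - apply (inj_count (fun j i => (u i, v j))). intros x y x' y' _ _ _ _ E; injection E; intros; split; auto. }
    destruct (Nat.le_gt_cases (d k) (s + 1)); nia.
  - rewrite sumL_mulc, sumL_plus. fold d e. nia.
Qed.


Definition cw (prog : list instr) (t : nat) := sumL (seq 0 t) (fun u => words (nth u prog d0)).

Lemma cw_S : forall prog t, cw prog (S t) = cw prog t + words (nth t prog d0).
Proof. intros; unfold cw; rewrite seq_S, sumL_app; simpl; lia. Qed.

Lemma cw_split : forall prog s m, cw prog (s + m) = cw prog s + sumL (seq s m) (fun u => words (nth u prog d0)).
Proof. intros; unfold cw; rewrite seq_app, sumL_app; auto. Qed.

Lemma cw_mono : forall prog t t', t <= t' -> cw prog t <= cw prog t'.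
Proof. intros prog t t' H; replace t' with (t + (t' - t)) by lia; rewrite cw_split; lia. Qed.

Lemma bw_eq : forall p, bandwidth p = cw p (length p).
Proof.
  unfold cw; induction p as [|i p IH]; simpl; auto.
  rewrite <- seq_shift, sumL_map; simpl; rewrite IH; auto.
Qed.

Lemma flat_len : forall {A B} (g : A -> list B) w l, (forall t, length (g t) <= w t) ->
  length (flat_map g l) <= sumL l w.
Proof. intros A B g w l H; induction l; simpl; auto. rewrite length_app; specialize (H a); lia. Qed.

Lemma filter_prefix : forall (p : nat -> bool), (forall t t', t <= t' -> p t' = true -> p t = true) ->
  forall m t, t < m -> (p t = true <-> t < length (filter p (seq 0 m))).
Proof.
  intros p Hp m; induction m as [|m IH]; intros t Ht; [lia|].
  rewrite seq_S, filter_app, length_app; simpl.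
  assert (Hc : length (filter p (seq 0 m)) <= m) by (rewrite <- (length_seq m 0) at 2; apply filter_length_le).
  destruct (p m) eqn:Epm; simpl.
  - assert (Hcm : length (filter p (seq 0 m)) = m).
    { destruct m as [|m']; [lia|]. assert (p m' = true) by (apply Hp with (S m'); auto).
      apply IH in H; lia. }
    rewrite Hcm; split; intros; [lia|]. apply Hp with m; auto; lia.
  - destruct (Nat.eq_dec t m).
    + subst; rewrite Epm; split; intros; [discriminate|lia].
    + rewrite Nat.add_0_r; apply IH; lia.
Qed.

Definition sq (M : nat) (prog : list instr) (q : nat) :=
  length (filter (fun t => cw prog t <? q * M) (seq 0 (S (length prog)))).

Lemma thr : forall M prog q t, t <= length prog -> (t < sq M prog q <-> cw prog t < q * M).
Proof.
  intros M prog q t Ht. unfold sq. rewrite <- (filter_prefix (fun t => cw prog t <? q * M)).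
  - apply Nat.ltb_lt.
  - intros a b Hab H; apply Nat.ltb_lt in H; apply Nat.ltb_lt; pose proof (cw_mono prog a b Hab); lia.
  - lia.
Qed.

Lemma fastvals_len : forall M st, length (fastvals M st) <= M.
Proof. intros; unfold fastvals; rewrite <- (length_seq M 0) at 2; apply len_fo. Qed.

Lemma seg_len : forall n M prog sts, Run n M prog sts -> forall q,
  length (Bseg M prog sts (min (sq M prog q) (length prog)) (min (sq M prog (S q)) (length prog))) <= 4 * M.
Proof.
  intros n M prog sts HR q. set (L := length prog).
  set (s := min (sq M prog q) L). set (e := min (sq M prog (S q)) L).
  unfold Bseg; rewrite !length_app.
  pose proof (fastvals_len M (sts s)) as Hf1; pose proof (fastvals_len M (sts e)) as Hf2.
  assert (Hm : length (flat_map (fun t => iovals (sts t) (nth t prog d0)) (seq s (e - s)))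
               <= sumL (seq s (e - s)) (fun u => words (nth u prog d0))).
  { apply flat_len; intros; apply iovals_len. }
  enough (sumL (seq s (e - s)) (fun u => words (nth u prog d0)) <= 2 * M) by lia.
  destruct (Nat.lt_ge_cases s e) as [Hse|Hse]; [|replace (e - s) with 0 by lia; simpl; lia].
  assert (HsL : sq M prog q <= L) by (unfold s, e in *; lia).
  assert (Hs : s = sq M prog q) by (unfold s; lia).
  assert (He : e <= L) by (unfold e; lia).
  assert (H1 : q * M <= cw prog s).
  { destruct (Nat.lt_ge_cases (cw prog s) (q * M)) as [H|H]; auto.
    apply (thr M prog q s) in H; lia. }
  assert (H2 : cw prog (e - 1) < S q * M).
  { apply thr; [lia|]. unfold e in *; lia. }
  assert (H3 : cw prog e <= cw prog (e - 1) + M).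
  { replace e with (S (e - 1)) at 1 by lia. rewrite cw_S.
    pose proof (step_words _ _ _ _ _ (HR (e - 1) ltac:(lia))).
    destruct (nth (e - 1) prog d0); simpl in *; lia. }
  pose proof (cw_split prog s (e - s)). replace (s + (e - s)) with e in * by lia. lia.
Qed.


Lemma inv_all : forall n M prog sts s0, Run n M prog sts -> sts 0 = init_state s0 ->
  matrix_layout n s0 -> forall t, t <= length prog -> Inv n M (sts t).
Proof.
  intros n M prog sts s0 HR H0 Hml t; induction t as [|t IH]; intros Ht.
  - rewrite H0; split; simpl; [intros; discriminate|].
    intros a v Hv; destruct (Hml a v Hv) as [i [j [H1 [H2 E]]]]; subst.
    right; exists i, j, true, (fun _ => false), true; constructor; auto.
  - eapply inv_step; [apply IH; lia|apply HR; lia].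
Qed.

Lemma lterm_not_ent : forall n i j e a b, Lterm n i j e -> e <> Ent a b.
Proof. intros n i j e a b H; inversion H; discriminate. Qed.

Lemma not_alive0 : forall n s0 x y, matrix_layout n s0 -> ~ alive (EMul x y) (init_state s0).
Proof.
  intros n s0 x y Hml [v [[[d Hd]|[a Ha]] Hs]]; simpl in *; [discriminate|].
  destruct (Hml a v Ha) as [i [j [_ [_ E]]]]; subst. apply sub_Ent in Hs; discriminate.
Qed.

Lemma sum1_const : forall b, sumL (seq 0 b) (fun _ => 1) = b.
Proof. intros; rewrite sumL_const, length_seq; lia. Qed.

Lemma sum2_lb : forall a b f, (forall x y, x < a -> y < b -> 1 <= f x y) ->
  a * b <= sumL (seq 0 a) (fun x => sumL (seq 0 b) (f x)).
Proof.
  intros a b f H.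
  assert (E : sumL (seq 0 a) (fun x => sumL (seq 0 b) (fun _ => 1)) = a * b).
  { rewrite (sumL_ext (seq 0 a) _ (fun _ => b)); [rewrite sumL_const, length_seq; lia|].
    intros; apply sum1_const. }
  rewrite <- E. apply sumL_le; intros x Hx; apply sumL_le; intros y Hy.
  apply in_seq in Hx, Hy; apply H; lia.
Qed.

Lemma sum3_lb : forall a f, (forall x y z, x < a -> y < a -> z < a -> 1 <= f x y z) ->
  a * a * a <= sumL (seq 0 a) (fun x => sumL (seq 0 a) (fun y => sumL (seq 0 a) (f x y))).
Proof.
  intros a f H.
  assert (E : sumL (seq 0 a) (fun x => sumL (seq 0 a) (fun y => sumL (seq 0 a) (fun _ => 1))) = a * a * a).
  { rewrite (sumL_ext (seq 0 a) _ (fun _ => a * a)); [rewrite sumL_const, length_seq; lia|].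
    intros; rewrite (sumL_ext (seq 0 a) _ (fun _ => a)); [rewrite sumL_const, length_seq; lia|].
    intros; apply sum1_const. }
  rewrite <- E. apply sumL_le; intros x Hx; apply sumL_le; intros y Hy; apply sumL_le; intros z Hz.
  apply in_seq in Hx, Hy, Hz; apply H; lia.
Qed.

Lemma trivial_bound : forall n M prog sts s0, Run n M prog sts -> sts 0 = init_state s0 ->
  matrix_layout n s0 -> computes_cholesky n (sts (length prog)) ->
  (n / 2) * (n / 2) <= bandwidth prog.
Proof.
  intros n M prog sts s0 HR H0 Hml Hcc. set (h := n / 2). set (L := length prog).
  set (Pall := map pairof (flat_map (fun t => iovals (sts t) (nth t prog d0)) (seq 0 L))).
  assert (Hh : 2 * h <= n) by (unfold h; pose proof (Nat.div_mod n 2); pose proof (Nat.mod_upper_bound n 2); lia).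
  apply Nat.le_trans with (length Pall).
  - apply Nat.le_trans with (sumL (seq 0 h) (fun x => sumL (seq 0 h) (fun y => inP (x + h, y) Pall))).
    + apply sum2_lb; intros x y Hx Hy.
      rewrite inP_in; auto.
      destruct (Hcc (x + h) y ltac:(lia) ltac:(lia)) as [a [E [HE HL]]].
      replace L with (0 + L) in HE by lia.
      destruct (slow_range _ _ _ _ HR 0 L ltac:(lia) a E HE) as [H|[t [Ht H]]].
      * rewrite H0 in H; simpl in H. destruct (Hml a E H) as [i [j [_ [_ E']]]].
        exfalso; eapply lterm_not_ent; eauto.
      * unfold Pall. rewrite <- (pairof_L _ _ _ _ HL). apply in_map. apply in_flat_map.
        exists t; split; auto. apply in_seq; lia.
    + apply (inj_count (fun x y => (x + h, y))). intros x y x' y' _ _ _ _ E; injection E; intros; split; lia.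
  - unfold Pall; rewrite length_map, bw_eq.
    replace (cw prog (length prog)) with (cw prog 0 + sumL (seq 0 L) (fun u => words (nth u prog d0))).
    + unfold cw at 1; simpl. apply flat_len; intros; apply iovals_len.
    + rewrite <- cw_split; auto.
Qed.


Definition PB M prog (sts : nat -> state) q :=
  map pairof (Bseg M prog sts (min (sq M prog q) (length prog)) (min (sq M prog (S q)) (length prog))).

Lemma exists_charge : forall n M prog sts s0, 0 < M -> Run n M prog sts -> sts 0 = init_state s0 ->
  matrix_layout n s0 -> computes_cholesky n (sts (length prog)) ->
  forall i j k, k < j -> j < i -> i < n ->
  exists q, q < S (bandwidth prog / M) /\ In (i,k) (PB M prog sts q) /\
    In (j,k) (PB M prog sts q) /\ In (i,j) (PB M prog sts q).
Proof.
  intros n M prog sts s0 HM HR H0 Hml Hcc i j k Hkj Hji Hin.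
  set (L := length prog).
  pose proof (inv_all _ _ _ _ _ HR H0 Hml) as HI.
  destruct (Hcc i j ltac:(lia) Hin) as [addr [E [HE HL]]].
  inversion HL; subst; [lia|]. match goal with Sv : nat -> bool |- _ => rename Sv into Sset end.
  match goal with Hp : Psum _ _ _ _ _ _ ?e, HS : forall k, ?S k = _ |- _ =>
    destruct (product_in _ _ _ _ _ _ _ Hp k) as [x [y [Hsub [Hx Hy]]]];
    [rewrite HS; apply Nat.ltb_lt; auto|] end.
  assert (HaL : alive (EMul x y) (sts L)).
  { exists (EDiv e d); split; [right; eauto|]. eapply sub_trans; [exact Hsub|]. apply sub_child; constructor. }
  assert (Ha0 : ~ alive (EMul x y) (sts 0)) by (rewrite H0; eapply not_alive0; eauto).
  destruct (switch_last (fun t => alive (EMul x y) (sts t)) L HaL Ha0) as [tau [Htau [Hna Hal]]].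
  set (q := cw prog tau / M).
  assert (Hq1 : M * q <= cw prog tau) by (unfold q; pose proof (Nat.div_mod (cw prog tau) M); lia).
  assert (Hq2 : cw prog tau < M * S q) by (unfold q; apply Nat.mul_succ_div_gt; lia).
  exists q. split.
  - assert (cw prog tau <= bandwidth prog) by (rewrite bw_eq; apply cw_mono; lia).
    assert (q <= bandwidth prog / M) by (unfold q; apply Nat.Div0.div_le_mono; auto). lia.
  - assert (Hs : min (sq M prog q) L <= tau).
    { destruct (Nat.lt_ge_cases tau (sq M prog q)) as [Hc|Hc]; [|lia].
      apply thr in Hc; lia. }
    assert (He : tau < min (sq M prog (S q)) L).
    { assert (tau < sq M prog (S q)) by (apply thr; lia). lia. }
    unfold PB; simpl.
    apply (charge n M prog sts HR HI i j k x y Hx Hy Hkj ltac:(lia) tau Htau Hna Hal); auto; lia.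
Qed.

Lemma box_bound : forall n M prog sts s0, 0 < M -> Run n M prog sts -> sts 0 = init_state s0 ->
  matrix_layout n s0 -> computes_cholesky n (sts (length prog)) ->
  (n / 3) * (n / 3) * (n / 3) <= S (bandwidth prog / M) * (8 * M * (Nat.sqrt (4 * M) + 1)).
Proof.
  intros n M prog sts s0 HM HR H0 Hml Hcc.
  set (a := n / 3). set (Q := S (bandwidth prog / M)).
  assert (Ha : 3 * a <= n) by (unfold a; pose proof (Nat.div_mod n 3); pose proof (Nat.mod_upper_bound n 3); lia).
  set (F := fun q k j i => inP (i + 2 * a, k) (PB M prog sts q) * inP (j + a, k) (PB M prog sts q)
                        * inP (i + 2 * a, j + a) (PB M prog sts q)).
  apply Nat.le_trans with (sumL (seq 0 a) (fun k => sumL (seq 0 a) (fun j => sumL (seq 0 a)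
                          (fun i => sumL (seq 0 Q) (fun q => F q k j i))))).
  { apply sum3_lb; intros k j i Hk Hj Hi.
    destruct (exists_charge _ _ _ _ _ HM HR H0 Hml Hcc (i + 2 * a) (j + a) k ltac:(lia) ltac:(lia) ltac:(lia))
      as [q [Hq [I1 [I2 I3]]]].
    apply Nat.le_trans with (F q k j i).
    - unfold F; rewrite !inP_in; auto.
    - apply sumL_ge_elem with (f := fun q => F q k j i); apply in_seq; lia. }
  replace (sumL (seq 0 a) (fun k => sumL (seq 0 a) (fun j => sumL (seq 0 a) (fun i => sumL (seq 0 Q) (fun q => F q k j i)))))
    with (sumL (seq 0 Q) (fun q => sumL (seq 0 a) (fun k => sumL (seq 0 a) (fun j => sumL (seq 0 a) (fun i => F q k j i))))).
  2:{ rewrite sumL_swap. apply sumL_ext; intros k _.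
      rewrite sumL_swap. apply sumL_ext; intros j _. rewrite sumL_swap; auto. }
  apply Nat.le_trans with (sumL (seq 0 Q) (fun _ => 8 * M * (Nat.sqrt (4 * M) + 1))).
  2:{ rewrite sumL_const, length_seq; lia. }
  apply sumL_le; intros q _.
  eapply Nat.le_trans; [apply (cube_bound (PB M prog sts q) (fun i => i + 2 * a) (fun j => j + a) a); intros; lia|].
  assert (HL : length (PB M prog sts q) <= 4 * M).
  { unfold PB; simpl; rewrite length_map; eapply seg_len; eauto. }
  pose proof (Nat.sqrt_le_mono _ _ HL). nia.
Qed.

Module RF.
Local Open Scope R_scope.

Lemma real_final : forall N m W Q A H S4 : R,
  N >= 2 -> m >= 1 -> 3 * A + 2 >= N -> A >= 0 -> 2 * H + 1 >= N -> H >= 0 ->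
  H * H <= W -> m * m * Q <= W -> Q >= 0 -> S4 >= 0 -> S4 * S4 <= 4 * (m * m) ->
  A * A * A <= (Q + 1) * (8 * (m * m) * (S4 + 1)) ->
  W * m >= N * N * N / 4000.
Proof.
  intros N m W Q A H S4 HN Hm HA HA0 HH HH0 HW1 HW2 HQ HS HS4 HB.
  assert (HS2 : S4 <= 2 * m) by nra.
  assert (HWq : W >= (N - 1) * (N - 1) / 4).
  { assert (H >= (N - 1) / 2) by lra. assert (H * H >= (N-1)/2 * ((N-1)/2)) by nra. nra. }
  destruct (Rlt_or_le N 8) as [Hs|Hl].
  - assert (N - 1 >= N / 2) by lra.
    assert (W >= N * N / 16) by nra.
    assert (W * m >= W) by nra.
    assert (N * N * N <= 8 * (N * N)) by nra.
    nra.
  - assert (HA4 : A >= N / 4) by lra.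
    assert (HA3 : A * A * A >= N / 4 * (N / 4) * (N / 4)).
    { assert (A * A >= N / 4 * (N / 4)) by nra. nra. }
    assert (HB2 : (Q + 1) * (8 * (m * m) * (S4 + 1)) <= (Q + 1) * (24 * (m * m * m))).
    { assert (8 * (m * m) * (S4 + 1) <= 24 * (m * m * m)) by nra. nra. }
    assert (HQm : (Q + 1) * (24 * (m * m * m)) <= 24 * (W * m) + 24 * (m * m * m)).
    { assert (m * m * Q * m <= W * m) by nra. nra. }
    destruct (Rle_or_lt (24 * (m * m * m)) (N * N * N / 128)) as [C|C].
    + nra.
    + assert (Hmn : m >= N / 15).
      { destruct (Rle_or_lt (N / 15) m) as [D|D]; [lra|].
        assert (m * m * m <= N / 15 * (N / 15) * (N / 15)).
        { assert (m * m <= N / 15 * (N / 15)) by nra. nra. }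
        nra. }
      assert (W >= N * N / 9) by nra.
      assert (W * m >= N * N / 9 * (N / 15)) by nra.
      nra.
Qed.

End RF.


Theorem corollary2p5 :
  exists c : R, (c > 0)%R /\
    forall (n M : nat) (s0 : nat -> option expr) (prog : list instr) (fin : state),
      0 < M -> M < n * n ->
      matrix_layout n s0 ->
      exec n M (init_state s0) prog fin ->
      computes_cholesky n fin ->
      (INR (bandwidth prog) >= c * INR n ^ 3 / sqrt (INR M))%R /\
      (INR (latency prog) >= c * INR n ^ 3 / (INR M * sqrt (INR M)))%R.
Proof.
  exists (1/4000)%R; split; [lra|].
  intros n M s0 prog fin HM HMn Hml Hex Hcc.
  pose proof (exec_lat _ _ _ _ _ Hex) as HLat.
  destruct (exec_states _ _ _ _ _ Hex) as [sts [H0 [HL HR]]].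
  rewrite <- HL in Hcc.
  pose proof (box_bound _ _ _ _ _ HM HR H0 Hml Hcc) as HB.
  pose proof (trivial_bound _ _ _ _ _ HR H0 Hml Hcc) as HT.
  set (W := bandwidth prog) in *. set (Lat := latency prog) in *.
  set (a := n / 3) in *. set (h := n / 2) in *. set (Q := W / M) in *.
  set (s4 := Nat.sqrt (4 * M)) in *.
  assert (Hn2 : 2 <= n) by nia.
  assert (Ha : n <= 3 * a + 2) by (unfold a; pose proof (Nat.div_mod n 3); pose proof (Nat.mod_upper_bound n 3); lia).
  assert (Hh : n <= 2 * h + 1) by (unfold h; pose proof (Nat.div_mod n 2); pose proof (Nat.mod_upper_bound n 2); lia).
  assert (HQ : M * Q <= W) by (unfold Q; pose proof (Nat.div_mod W M); lia).
  assert (Hs4 : s4 * s4 <= 4 * M) by (unfold s4; apply Nat.sqrt_spec; lia).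
  set (m := sqrt (INR M)).
  assert (HMr : (INR M >= 1)%R) by (apply Rle_ge; apply (le_INR 1); lia).
  assert (Hmm : (m * m = INR M)%R) by (unfold m; apply sqrt_sqrt; lra).
  assert (Hm1 : (m >= 1)%R).
  { unfold m; rewrite <- sqrt_1. apply Rle_ge, sqrt_le_1_alt; lra. }
  assert (Hkey : (INR W * m >= INR n * INR n * INR n / 4000)%R).
  { apply (RF.real_final (INR n) m (INR W) (INR Q) (INR a) (INR h) (INR s4)).
    - apply Rle_ge; apply (le_INR 2); auto.
    - auto.
    - apply Rle_ge; replace 3%R with (INR 3) by (simpl; lra). replace 2%R with (INR 2) by (simpl; lra).
      rewrite <- mult_INR, <- plus_INR; apply le_INR; lia.
    - apply Rle_ge, pos_INR.
    - apply Rle_ge; replace 2%R with (INR 2) by (simpl; lra). rewrite <- mult_INR, <- S_INR; apply le_INR; lia.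
    - apply Rle_ge, pos_INR.
    - rewrite <- mult_INR; apply le_INR; auto.
    - rewrite Hmm, <- mult_INR; apply le_INR; auto.
    - apply Rle_ge, pos_INR.
    - apply Rle_ge, pos_INR.
    - rewrite Hmm; replace 4%R with (INR 4) by (simpl; lra). rewrite <- !mult_INR; apply le_INR; auto.
    - rewrite Hmm. replace 8%R with (INR 8) by (simpl; lra). replace 1%R with (INR 1) by (simpl; lra).
      rewrite <- !plus_INR, <- !mult_INR. apply le_INR.
      replace (Q + 1)%nat with (S Q) by lia. replace (s4 + 1)%nat with (S s4) by lia.
      replace (8 * M * S s4)%nat with (8 * M * (s4 + 1))%nat by lia. nia. }
  assert (Hmpos : (m > 0)%R) by lra.
  assert (HWL : (INR W <= INR M * INR Lat)%R) by (rewrite <- mult_INR; apply le_INR; auto).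
  split.
  - apply Rle_ge. unfold Rdiv. apply Rmult_le_reg_r with m; auto.
    rewrite Rmult_assoc, Rinv_l by lra. simpl. nra.
  - apply Rle_ge. unfold Rdiv. rewrite <- Hmm.
    apply Rmult_le_reg_r with (m * m * m)%R; [nra|].
    replace (1 * / 4000 * INR n ^ 3 * / (m * m * m) * (m * m * m))%R
      with (INR n * INR n * INR n / 4000)%R by (field; lra).
    rewrite <- Hmm in HWL.
    assert (INR W * m <= m * m * INR Lat * m)%R by (apply Rmult_le_compat_r; lra).
    nra.
Qed.
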